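(* Let $\lambda$ be Lebesgue measure on $[0,1]$ and let $T:[0,1]\to[0,1]$ be an invertible, ergodic, $\lambda$-preserving transformation which is rigid rank 1 (in the sense defined in the context), with associated numbers $n_k$ and sets $A_k$. Define $$\mathcal{R}_k=\bigcup_{i=0}^{n_k-1}T^iA_k,\qquad \hat{\mathcal{R}}_k=\bigcup_{i=0}^{n_k-1}T^i\big(A_k\cap T^{-n_k}A_k\cap T^{n_k}A_k\big),$$ $$\tilde{\mathcal{R}}_k=\bigcup_{i=0}^{n_k-1}T^i\big(A_k\cap T^{-n_k}A_k\cap T^{-2n_k}A_k\cap T^{n_k}A_k\cap T^{2n_k}A_k\big).$$ Then $$\lim_{k\to\infty}\lambda(\tilde{\mathcal{R}}_k)=\lim_{k\to\infty}\lambda(\mathcal{R}_k)=\lim_{k\to\infty}\lambda(\hat{\mathcal{R}}_k)=1.$$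
   Context: $T$ is called rigid rank 1 if there exist positive integers $n_j$ and measurable sets $A_j\subset[0,1]$ such that: (1) $\lim_{j\to\infty}\lambda\big(\bigcup_{i=0}^{n_j-1}T^iA_j\big)=1$; (2) the sets $A_j,TA_j,\dots,T^{n_j-1}A_j$ are pairwise disjoint; (3) $\lim_{j\to\infty}\lambda(T^{n_j}A_j\cap A_j)/\lambda(A_j)=1$; (4) for every $\varepsilon>0$ there exist, for each $j$, metric balls $B^{(j)}_0,\dots,B^{(j)}_{n_j-1}\subset[0,1]$ of diameter at most $\varepsilon$ such that $\lim_{j\to\infty}\sum_{i=0}^{n_j-1}\lambda(T^iA_j\setminus B^{(j)}_i)=0$. *)

(* Defs.v *)
From HB Require Import structures.
From mathcomp Require Import all_boot all_order all_algebra.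
From mathcomp Require Import all_classical all_reals all_analysis.
Set Implicit Arguments. Unset Strict Implicit. Unset Printing Implicit Defensive.
Import Order.TTheory GRing.Theory Num.Theory.
Import numFieldNormedType.Exports.
Local Open Scope classical_set_scope.
Local Open Scope ring_scope.

Definition I01 {R : realType} : set R := `[0%R, 1%R].

Notation lam := (@lebesgue_measure _).

Definition fimg {R : realType} (T : R -> R) (i : nat) (A : set R) : set R :=
  iter i T @` A.

Definition bimg {R : realType} (T : R -> R) (i : nat) (A : set R) : set R :=
  I01 `&` (iter i T @^-1` A).

Definition invertible_mp_ergodic {R : realType} (T : R -> R) : Prop :=
  [/\ set_bij I01 I01 T,
      measurable_fun I01 T,
      (forall A : set R, measurable A -> A `<=` I01 -> measurable (T @` A)),
      (forall A : set R, measurable A -> A `<=` I01 ->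
          lam (bimg T 1 A) = lam A) &
      (forall A : set R, measurable A -> A `<=` I01 -> bimg T 1 A = A ->
          lam A = 0%E \/ lam A = 1%E)].

Definition rigid_rank1_data {R : realType} (T : R -> R)
    (n : nat -> nat) (A : nat -> set R) : Prop :=
  [/\ (forall j, [/\ (0 < n j)%N, measurable (A j) & A j `<=` I01]),
      (fun j => lam (\bigcup_(i in `I_(n j)) fimg T i (A j))) @ \oo --> 1%E,
      (forall j i k, (i < k)%N -> (k < n j)%N ->
          fimg T i (A j) `&` fimg T k (A j) = set0),
      (fun j => fine (lam (fimg T (n j) (A j) `&` A j)) / fine (lam (A j)))
          @ \oo --> (1 : R) &
      (forall eps : R, 0 < eps ->
         exists (c r : nat -> nat -> R),
           (forall j i, 2 * r j i <= eps) /\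
           (fun j => (\sum_(0 <= i < n j)
                        lam (fimg T i (A j) `\` ball (c j i) (r j i)))%E)
             @ \oo --> 0%E)].

Definition calR {R : realType} (T : R -> R) (n : nat -> nat) (A : nat -> set R)
  (k : nat) : set R := \bigcup_(i in `I_(n k)) fimg T i (A k).

Definition hatR {R : realType} (T : R -> R) (n : nat -> nat) (A : nat -> set R)
  (k : nat) : set R :=
  \bigcup_(i in `I_(n k))
     fimg T i (A k `&` bimg T (n k) (A k) `&` fimg T (n k) (A k)).

Definition tildeR {R : realType} (T : R -> R) (n : nat -> nat) (A : nat -> set R)
  (k : nat) : set R :=
  \bigcup_(i in `I_(n k))
     fimg T i (A k `&` bimg T (n k) (A k) `&` bimg T (2 * n k)%N (A k)
                   `&` fimg T (n k) (A k) `&` fimg T (2 * n k)%N (A k)).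

(* Main.v *)
Require Import Defs.
From HB Require Import structures.
From mathcomp Require Import all_boot all_order all_algebra.
From mathcomp Require Import all_classical all_reals all_analysis.
From mathcomp Require Import ring lra.
Import Order.TTheory GRing.Theory Num.Theory.
Import numFieldNormedType.Exports.
Local Open Scope classical_set_scope.
Local Open Scope ring_scope.

Section S.
Variables (R : realType) (T : R -> R).
Hypothesis HT : invertible_mp_ergodic T.

Lemma mI01 : measurable (@I01 R).
Proof. exact: measurable_itv. Qed.

Lemma lamI01 : lam (@I01 R) = 1%E.
Proof. rewrite /I01 lebesgue_measure_itv /= lte_fin ltr01 /= oppr0 adde0 //. Qed.

Lemma iter_I01 i x : I01 x -> I01 (iter i T x).
Proof.
case: HT => -[Hf _ _] _ _ _ _.
elim: i => //= i IH Hx; apply: Hf; exact: IH.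
Qed.

Lemma fimg_sub i B : B `<=` I01 -> fimg T i B `<=` I01.
Proof. by move=> HB _ [x Bx <-]; apply: iter_I01; apply: HB. Qed.

Lemma fimg0 B : fimg T 0 B = B.
Proof. by apply/seteqP; split => y; [case=> x Bx <-|move=> By; exists y]. Qed.

Lemma fimgS i B : fimg T i.+1 B = T @` fimg T i B.
Proof.
apply/seteqP; split => y.
  by case=> x Bx <-; exists (iter i T x) => //; exists x.
by case=> _ [x Bx <-] <-; exists x.
Qed.

Lemma fimg_meas i B : measurable B -> B `<=` I01 -> measurable (fimg T i B).
Proof.
case: HT => _ _ Himg _ _ mB HB.
elim: i => [|i IH]; first by rewrite fimg0.
by rewrite fimgS; apply: Himg => //; apply: fimg_sub.
Qed.

Lemma bij_preim B : B `<=` I01 -> bimg T 1 (T @` B) = B.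
Proof.
case: HT => -[_ Hinj _] _ _ _ _ HB.
apply/seteqP; split => x.
  case=> Ix [b Bb Eb]; have := Hinj b x (mem_set (HB _ Bb)) (mem_set Ix) Eb.
  by move=> <-.
by move=> Bx; split; [exact: HB|exists x].
Qed.

Lemma lamT B : measurable B -> B `<=` I01 -> lam (T @` B) = lam B.
Proof.
case: HT => _ _ Himg Hpres _ mB HB.
rewrite -{2}(bij_preim _ HB); symmetry; apply: Hpres; first exact: Himg.
by move=> _ [x Bx <-]; apply: (iter_I01 1); apply: HB.
Qed.

Lemma fimg_lam i B : measurable B -> B `<=` I01 -> lam (fimg T i B) = lam B.
Proof.
move=> mB HB; elim: i => [|i IH]; first by rewrite fimg0.
rewrite fimgS lamT //; [exact: fimg_meas|exact: fimg_sub].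
Qed.

Lemma bimg_meas i Y : measurable Y -> measurable (bimg T i Y).
Proof.
case: HT => _ Hmf _ _ _.
elim: i Y => [|i IH] Y mY; first by apply: measurableI => //; exact: mI01.
have -> : bimg T i.+1 Y = bimg T i (bimg T 1 Y).
  apply/seteqP; split => x.
    by case=> Ix /= HY; split => //; split => //; apply: iter_I01.
  by case=> Ix [] _ /= HY; split.
by apply: IH; apply: Hmf => //; exact: mI01.
Qed.

Lemma fimg_bimg m (A : set R) : A `<=` I01 -> fimg T m (A `&` bimg T m A) = fimg T m A `&` A.
Proof.
move=> HA; apply/seteqP; split => y.
  by case=> x [Ax [_ /= H]] <-; split => //; exists x.
by case=> -[x Ax <-] H; exists x => //; split => //; split => //; exact: HA.
Qed.

Lemma lam_fin (X : set R) : X `<=` I01 -> measurable X -> (lam X < +oo)%E.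
Proof.
move=> HX mX; apply: (@le_lt_trans _ _ (lam (@I01 R))).
  by apply: le_measure => //; rewrite inE //; exact: mI01.
by rewrite lamI01 ltry.
Qed.


Notation mu X := (fine (lam X)).

Lemma lamE (X : set R) : X `<=` I01 -> measurable X -> lam X = (mu X)%:E.
Proof. by move=> HX mX; rewrite fineK // ge0_fin_numE ?measure_ge0 // lam_fin. Qed.

Lemma mu_ge0 (X : set R) : 0 <= mu X.
Proof. exact/fine_ge0/measure_ge0. Qed.

Lemma mu_le (X Y : set R) : measurable X -> measurable Y -> Y `<=` I01 ->
  X `<=` Y -> mu X <= mu Y.
Proof.
move=> mX mY HY XY; have HX : X `<=` I01 by move=> x /XY /HY.
by rewrite -lee_fin -lamE // -lamE //; apply: le_measure => //; rewrite inE.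
Qed.

Lemma mu_U (X Y : set R) : measurable X -> measurable Y -> X `<=` I01 -> Y `<=` I01 ->
  mu (X `|` Y) <= mu X + mu Y.
Proof.
move=> mX mY HX HY.
have HU : X `|` Y `<=` I01 by move=> x [/HX|/HY].
rewrite -lee_fin EFinD -!lamE //; first exact: measureU2.
exact: measurableU.
Qed.

Lemma mu_D (X Y : set R) : measurable X -> measurable Y -> X `<=` I01 ->
  mu (X `\` Y) = mu X - mu (X `&` Y).
Proof.
move=> mX mY HX.
have H1 : X `\` Y `<=` I01 by move=> x [/HX].
have H2 : X `&` Y `<=` I01 by move=> x [/HX].
have m1 : measurable (X `\` Y) by apply: measurableD.
have m2 : measurable (X `&` Y) by apply: measurableI.
apply: EFin_inj; rewrite EFinB -!lamE //.
by apply: measureD => //; apply: lam_fin.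
Qed.

Section A.
Variables (A : set R).
Hypotheses (mA : measurable A) (HA : A `<=` I01).

Lemma mfimg m : measurable (fimg T m A). Proof. exact: fimg_meas. Qed.
Lemma sfimg m : fimg T m A `<=` I01. Proof. exact: fimg_sub. Qed.

Lemma Dbimg m : mu (A `\` bimg T m A) = mu (A `\` fimg T m A).
Proof.
rewrite !mu_D //; [|exact: mfimg|exact: bimg_meas].
have mAB : measurable (A `&` bimg T m A) by apply: measurableI => //; apply: bimg_meas.
have sAB : A `&` bimg T m A `<=` I01 by move=> x [/HA].
by rewrite -(fimg_lam m _ mAB sAB) fimg_bimg // setIC.
Qed.

Lemma D2 m : mu (A `\` fimg T (2 * m)%N A) <= mu (A `\` fimg T m A) + mu (A `\` fimg T m A).
Proof.
have mD : measurable (A `\` fimg T m A) by apply: measurableD => //; apply: mfimg.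
have sD : A `\` fimg T m A `<=` I01 by move=> x [/HA].
have sub : A `\` fimg T (2 * m)%N A `<=` (A `\` fimg T m A) `|` fimg T m (A `\` fimg T m A).
  move=> x [Ax nx]; case: (pselect (fimg T m A x)) => [[a Aa ea]|nf].
    right; exists a => //; split => // -[b Bb eb]; apply: nx; exists b => //.
    by rewrite mul2n -addnn iterD eb ea.
  by left.
apply: (le_trans (mu_le _ _ _ _ _ sub)).
- by apply: measurableD => //; apply: mfimg.
- by apply: measurableU => //; apply: fimg_meas.
- by move=> x [/sD|]; [|apply: fimg_sub].
apply: (le_trans (mu_U _ _ _ _ _ _)) => //; [exact: fimg_meas|exact: fimg_sub|].
by rewrite fimg_lam.
Qed.


Ltac mt := repeat first [ exact: mA | apply: bimg_meas | exact: mfimg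
  | apply: measurableD | apply: measurableI | apply: measurableU ].

Lemma Dhat m : mu (A `\` (A `&` bimg T m A `&` fimg T m A)) <=
  mu (A `\` fimg T m A) + mu (A `\` fimg T m A).
Proof.
have sub : A `\` (A `&` bimg T m A `&` fimg T m A) `<=`
    (A `\` bimg T m A) `|` (A `\` fimg T m A).
  move=> x [Ax nB]; case: (pselect (bimg T m A x)) => [b|nb]; last by left.
  case: (pselect (fimg T m A x)) => [f|nf]; last by right.
  by exfalso; apply: nB.
apply: (le_trans (mu_le _ _ _ _ _ sub)); [mt|mt|by move=> x [[]/HA|[]/HA]|].
apply: (le_trans (mu_U _ _ _ _ _ _)); [mt|mt|by move=> x []/HA|by move=> x []/HA|].
by rewrite Dbimg.
Qed.

Lemma Dtilde m : mu (A `\` (A `&` bimg T m A `&` bimg T (2 * m)%N A `&` fimg T m A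
   `&` fimg T (2 * m)%N A)) <= 6%:R * mu (A `\` fimg T m A).
Proof.
set e := mu (A `\` fimg T m A).
have sub : A `\` (A `&` bimg T m A `&` bimg T (2 * m)%N A `&` fimg T m A
   `&` fimg T (2 * m)%N A) `<=`
    (A `\` bimg T m A) `|` (A `\` bimg T (2 * m)%N A) `|` (A `\` fimg T m A)
    `|` (A `\` fimg T (2 * m)%N A).
  move=> x [Ax nB]; case: (pselect (bimg T m A x)) => [b1|nb]; last by left; left; left.
  case: (pselect (bimg T (2 * m)%N A x)) => [b2|nb]; last by left; left; right.
  case: (pselect (fimg T m A x)) => [f1|nf]; last by left; right.
  case: (pselect (fimg T (2 * m)%N A x)) => [f2|nf]; last by right.
  by exfalso; apply: nB.
have s1 : forall Y, A `\` Y `<=` I01 by move=> Y x []/HA.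
apply: (le_trans (mu_le _ _ _ _ _ sub)); [mt|mt|
  by move=> x [[[]|]|] []/HA|].
apply: (le_trans (mu_U _ _ _ _ _ _)); [mt|mt|by move=> x [[]|] []/HA|by []|].
apply: (le_trans (lerD (mu_U _ _ _ _ _ _) (lexx _))); [mt|mt|by move=> x [] []/HA|by []|].
apply: (le_trans (lerD (lerD (mu_U _ _ _ _ _ _) (lexx _)) (lexx _))); [mt|mt|by []|by []|].
rewrite !Dbimg.
have := D2 m; rewrite -/e => h.
have := mu_ge0 (A `\` fimg T m A); rewrite -/e => h0.
lra.
Qed.


Lemma mbig n (B : set R) : measurable B -> B `<=` I01 ->
  measurable (\bigcup_(i in `I_n) fimg T i B).
Proof. by move=> mB HB; apply: bigcup_measurable => k _; apply: fimg_meas. Qed.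

Lemma sbig n (B : set R) : B `<=` I01 -> \bigcup_(i in `I_n) fimg T i B `<=` I01.
Proof. by move=> HB x [i _ /fimg_sub]; apply. Qed.

Lemma calR_mu n : (forall i k, (i < k)%N -> (k < n)%N ->
    fimg T i A `&` fimg T k A = set0) ->
  mu (\bigcup_(i in `I_n) fimg T i A) = n%:R * mu A.
Proof.
move=> Hd; apply: EFin_inj; rewrite -lamE; [|exact: sbig|exact: mbig].
set F := fun i => if (i < n)%N then fimg T i A else set0.
have -> : \bigcup_(i in `I_n) fimg T i A = \big[setU/set0]_(i < n) F i.
  rewrite -bigcup_mkord; apply: eq_bigcupr => i /= ilt; rewrite /F.
  by move: ilt; rewrite /= => ->.
have mF : forall i, measurable (F i).
  by move=> i; rewrite /F; case: ifP => _; [exact: mfimg|exact: measurable0].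
have tF : trivIset setT F.
  move=> i j _ _ [x [Fi Fj]]; rewrite /F in Fi Fj.
  move: Fi Fj; case: ifP => // hi Fi; case: ifP => // hj Fj.
  case: (ltngtP i j) => // h.
    by have : (fimg T i A `&` fimg T j A) x by []; rewrite Hd.
  by have : (fimg T j A `&` fimg T i A) x by []; rewrite Hd.
rewrite (measure_bigsetU lam mF tF n).
rewrite (eq_bigr (fun=> lam A)); last first.
  by move=> i _; rewrite /F ltn_ord /= fimg_lam.
by rewrite sumr_const card_ord lamE // mulr_natl EFin_natmul.
Qed.

Lemma cover n (B : set R) : measurable B -> B `<=` A ->
  mu (\bigcup_(i in `I_n) fimg T i A) <=
  mu (\bigcup_(i in `I_n) fimg T i B) + n%:R * mu (A `\` B).
Proof.
move=> mB BA; have HB : B `<=` I01 by move=> x /BA /HA.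
have mD : measurable (A `\` B) by apply: measurableD.
have sD : A `\` B `<=` I01 by move=> x [/HA].
have sub : \bigcup_(i in `I_n) fimg T i A `<=`
   \bigcup_(i in `I_n) fimg T i B `|` \bigcup_(i in `I_n) fimg T i (A `\` B).
  move=> _ [i hi [a Aa <-]]; case: (pselect (B a)) => Ba; [left|right];
    by exists i => //; exists a.
apply: (le_trans (mu_le _ _ _ _ _ sub)); [exact: mbig|
  by apply: measurableU; apply: mbig|by move=> x [|]; apply: sbig|].
apply: (le_trans (mu_U _ _ _ _ _ _)); [exact: mbig|exact: mbig|exact: sbig|exact: sbig|].
rewrite lerD2l -lee_fin -lamE; [|exact: sbig|exact: mbig].
apply: (le_trans (content_subadditive lam (A:=\bigcup_(i in `I_n) fimg T i (A `\` B))
   (F:=fun i => fimg T i (A `\` B)) (n:=n) _ _ _)).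
- by move=> k _; apply: fimg_meas.
- exact: mbig.
- by rewrite -(bigcup_mkord n (fun k => fimg T k (A `\` B))).
rewrite (eq_bigr (fun=> lam (A `\` B))); last by move=> i _; rewrite /= fimg_lam.
by rewrite sumr_const card_ord lamE // mulr_natl EFin_natmul.
Qed.


Lemma muI01 : mu (@I01 R) = 1.
Proof. by rewrite lamI01. Qed.

Lemma key n (B : set R) (C : R) : (forall i k, (i < k)%N -> (k < n)%N ->
    fimg T i A `&` fimg T k A = set0) ->
  measurable B -> B `<=` A -> 0 <= C ->
  mu (A `\` B) <= C * mu (A `\` fimg T n A) ->
  mu (\bigcup_(i in `I_n) fimg T i A) - C * (1 - mu (fimg T n A `&` A) / mu A)
  <= mu (\bigcup_(i in `I_n) fimg T i B) <= mu (\bigcup_(i in `I_n) fimg T i A).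
Proof.
move=> Hd mB BA C0 HC.
have HB : B `<=` I01 by move=> x /BA /HA.
have Hc := calR_mu _ Hd.
have c1 : mu (\bigcup_(i in `I_n) fimg T i A) <= 1.
  rewrite -muI01; apply: mu_le; [exact: mbig|exact: mI01|by []|exact: sbig].
have Hcov := cover n _ mB BA.
have He : mu (A `\` fimg T n A) = mu A - mu (fimg T n A `&` A).
  by rewrite mu_D //; [rewrite (setIC A)|apply: mfimg].
have ba : mu (fimg T n A `&` A) <= mu A.
  apply: (mu_le _ _ _ mA HA); [apply: measurableI => //; apply: mfimg|by move=> x []].
have b0 := mu_ge0 (fimg T n A `&` A).
have t1 : mu (\bigcup_(i in `I_n) fimg T i B) <= mu (\bigcup_(i in `I_n) fimg T i A).
  apply: mu_le; [exact: mbig|exact: mbig|exact: sbig|].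
  by move=> _ [i hi [b Bb <-]]; exists i => //; exists b => //; apply: BA.
rewrite t1 andbT.
set a := mu A in Hc He ba *; set b := mu (fimg T n A `&` A) in He ba b0 *.
set c := mu (\bigcup_(i in `I_n) fimg T i A) in Hc c1 Hcov t1 *.
set t := mu (\bigcup_(i in `I_n) fimg T i B) in Hcov t1 *.
set e := mu (A `\` fimg T n A) in HC He *.
set d := mu (A `\` B) in HC Hcov *.
have Hne : n%:R * e <= 1 - b / a.
  have [a0|a0] := eqVneq a 0.
    have b00 : b = 0 by apply/eqP; rewrite eq_le b0 andbT -a0.
    by rewrite He a0 b00 invr0 !mulr0 subr0 mulr0 subr0 ler01.
  have ap : 0 < a by rewrite lt_def a0 mu_ge0.
  have r1 : b / a <= 1 by rewrite ler_pdivrMr // mul1r.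
  have ra : b / a * a = b by rewrite divfK.
  have -> : n%:R * e = c * (1 - b / a).
    by rewrite Hc He -{1}ra; ring.
  have : 0 <= 1 - b / a by rewrite subr_ge0.
  move=> h; rewrite -[X in _ <= X]mul1r; exact: ler_wpM2r.
have n0 : 0 <= n%:R :> R by [].
have d0 : 0 <= d by apply: mu_ge0.
have : n%:R * d <= C * (1 - b / a).
  apply: (le_trans (ler_wpM2l n0 HC)).
  by rewrite mulrCA; apply: ler_wpM2l => //.
move=> h; rewrite lerBlDr; apply: (le_trans Hcov); rewrite lerD2l; exact: h.
Qed.


Lemma mBh m : measurable (A `&` bimg T m A `&` fimg T m A). Proof. mt. Qed.
Lemma mBt m : measurable (A `&` bimg T m A `&` bimg T (2 * m)%N A `&` fimg T m A
   `&` fimg T (2 * m)%N A). Proof. mt. Qed.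

End A.

Lemma fin_lim (X : nat -> set R) (c r : nat -> R) (C : R) :
  (forall k, measurable (X k) /\ X k `<=` I01) ->
  (forall k, c k - C * (1 - r k) <= mu (X k) <= c k) ->
  c @ \oo --> (1 : R) -> r @ \oo --> (1 : R) ->
  (fun k => lam (X k)) @ \oo --> 1%E.
Proof.
move=> HX Hb hc hr; apply/fine_cvgP; split.
  apply: nearW => k; have [mX sX] := HX k.
  by rewrite (lamE _ sX mX).
have L : (fun k => c k - C * (1 - r k)) @ \oo --> (1 - C * (1 - 1) : R).
  apply: cvgB => //; apply: cvgM; first exact: cvg_cst.
  by apply: cvgB => //; exact: cvg_cst.
rewrite subrr mulr0 subr0 in L.
apply: (squeeze_cvgr _ L hc).
by apply: nearW => k; exact: Hb.
Qed.

End S.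

Theorem mainTheorem1 (R : realType) (T : R -> R) (n : nat -> nat)
    (A : nat -> set R) :
  invertible_mp_ergodic T -> rigid_rank1_data T n A ->
  [/\ (fun k => lam (tildeR T n A k)) @ \oo --> 1%E,
      (fun k => lam (calR T n A k)) @ \oo --> 1%E &
      (fun k => lam (hatR T n A k)) @ \oo --> 1%E].
Proof.
move=> HT [Hj H1 H2 H3 _].
have hc : (fun k => fine (lam (calR T n A k))) @ \oo --> (1 : R).
  by have [_ +] := (fine_cvgP _ _).1 H1.
split => //.
- apply: (@fin_lim R _ (fun k => fine (lam (calR T n A k))) _ 6 _ _ hc H3).
    move=> k; have [_ mA sA] := Hj k.
    have sB : (A k `&` bimg T (n k) (A k) `&` bimg T (2 * n k) (A k) `&`
       fimg T (n k) (A k) `&` fimg T (2 * n k) (A k)) `<=` I01.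
      by move=> x [[[[Ax _] _] _] _]; exact: sA.
    rewrite /tildeR /hatR; split; first exact: (mbig _ _ HT _ _ (mBt _ _ HT _ mA sA _) sB).
    exact: (sbig _ _ HT _ _ sB).
  move=> k; have [_ mA sA] := Hj k.
  apply: (key _ _ HT _ mA sA _ _ _ (H2 k) (mBt _ _ HT _ mA sA _)) => //.
    by move=> x [[[[]]]].
  exact: (Dtilde _ _ HT _ mA sA).
- apply: (@fin_lim R _ (fun k => fine (lam (calR T n A k))) _ 2 _ _ hc H3).
    move=> k; have [_ mA sA] := Hj k.
    have sB : (A k `&` bimg T (n k) (A k) `&` fimg T (n k) (A k)) `<=` I01.
      by move=> x [[Ax _] _]; exact: sA.
    rewrite /tildeR /hatR; split; first exact: (mbig _ _ HT _ _ (mBh _ _ HT _ mA sA _) sB).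
    exact: (sbig _ _ HT _ _ sB).
  move=> k; have [_ mA sA] := Hj k.
  apply: (key _ _ HT _ mA sA _ _ _ (H2 k) (mBh _ _ HT _ mA sA _)) => //.
    by move=> x [[]].
  apply: (le_trans (Dhat _ _ HT _ mA sA _)); rewrite mulr2n mulrDl mul1r //.
Qed.
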